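(* Let $d\ge 2$ be an integer and $\theta>0$. There is no tournament of Type (1) with $n=2d$ vertices whose Seidel matrix has spectrum $\{(-\theta)^{d-1},0^{2},\theta^{d-1}\}$ (exponents denote multiplicities).
   Context: A tournament on vertex set $V$ is an orientation of the complete graph on $V$; its adjacency matrix $A$ has $A_{xy}=1$ if $x\to y$ and $0$ otherwise, and its Seidel matrix is $S=\sqrt{-1}(A-A^T)$. Let $\tau_1<\cdots<\tau_s$ be the distinct eigenvalues of $S$ with multiplicities $m_i$, and main angles $\beta_i=\frac1{\sqrt n}\|E_ij\|$, where $E_i$ is the orthogonal projection onto the $\tau_i$-eigenspace and $j$ the all-ones vector. The tournament is of Type (1) if $\beta_1=0$; of Type (2) if $\beta_1\neq0$ and $m_1>1$; of Type (3) if $m_1=1$, $\beta_2=0$ and $c_2<0$, where $c_2=n\beta_1^2/(\tau_1-\tau_2)+\sum_{i=3}^s n\beta_i^2/(\tau_i-\tau_2)$; and of Type (4) otherwise. *)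

(* Defs.v *)
From HB Require Import structures.
From mathcomp Require Import all_boot all_order all_algebra all_field algC.
Set Implicit Arguments. Unset Strict Implicit. Unset Printing Implicit Defensive.
Import Order.TTheory GRing.Theory Num.Theory Num.Def.
Local Open Scope ring_scope.

Definition is_tournament (n : nat) (T : rel 'I_n) : Prop :=
  forall x y : 'I_n, (x == y) || (T x y (+) T y x)%B.
  (* x = y, or exactly one of x->y, y->x; for x = y this does not force ~T x x,
     so irreflexivity is added separately below *)

Definition tournament (n : nat) (T : rel 'I_n) : Prop :=
  (forall x : 'I_n, ~~ T x x) /\ is_tournament T.

Definition adjmx (n : nat) (T : rel 'I_n) : 'M[algC]_n :=
  \matrix_(x, y) (T x y)%:R.

Definition seidel (n : nat) (T : rel 'I_n) : 'M[algC]_n :=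
  'i *: (adjmx T - (adjmx T)^T).

Definition ctrmx (n : nat) (M : 'M[algC]_n) : 'M[algC]_n := (map_mx conjC M)^T.

Definition jvec (n : nat) : 'cV[algC]_n := const_mx 1.

(* E is the orthogonal projection (of C^n, column vectors) onto the
   tau-eigenspace {x | S x = tau x} of S *)
Definition is_eig_proj (n : nat) (S : 'M[algC]_n) (tau : algC) (E : 'M[algC]_n) : Prop :=
  [/\ ctrmx E = E, E *m E = E,
      (forall x : 'cV[algC]_n, S *m (E *m x) = tau *: (E *m x)) &
      (forall x : 'cV[algC]_n, S *m x = tau *: x -> E *m x = x)].

Definition smallest_eigenvalue (n : nat) (S : 'M[algC]_n) (tau : algC) : Prop :=
  eigenvalue S tau /\ forall mu, eigenvalue S mu -> tau <= mu.

(* Type (1): beta_1 = (1/sqrt n) ||E_1 j|| = 0, i.e. E_1 j = 0 *)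
Definition type1 (n : nat) (T : rel 'I_n) : Prop :=
  exists tau1 : algC, smallest_eigenvalue (seidel T) tau1 /\
    exists E : 'M[algC]_n, is_eig_proj (seidel T) tau1 E /\ E *m jvec n = 0.

(* Main.v *)
Require Import Defs.
From HB Require Import structures.
From mathcomp Require Import all_boot all_order all_algebra all_field algC.
From mathcomp Require Import ring.
Import Order.TTheory GRing.Theory Num.Theory Num.Def.
Set Implicit Arguments. Unset Strict Implicit. Unset Printing Implicit Defensive.
Local Open Scope ring_scope.

Definition ctv n (y : 'cV[algC]_n) : 'rV[algC]_n := (map_mx conjC y)^T.

Lemma ctvM n m (A : 'M[algC]_(m,n)) (y : 'cV_n) :
  ctv (A *m y) = ctv y *m (map_mx conjC A)^T.
Proof. by rewrite /ctv map_mxM trmx_mul. Qed.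

Lemma ctvZ n (c : algC) (y : 'cV_n) : ctv (c *: y) = c^* *: ctv y.
Proof. by rewrite /ctv map_mxZ linearZ. Qed.

Lemma herm_ctv n (H : 'M[algC]_n) y : ctrmx H = H -> ctv (H *m y) = ctv y *m H.
Proof. by move=> hH; rewrite ctvM -{2}hH. Qed.

Lemma ctv_eq0 n (y : 'cV[algC]_n) : ctv y *m y = 0 -> y = 0.
Proof.
move=> h; apply/matrixP=> i j; rewrite ord1 [RHS]mxE.
have := congr1 (fun M : 'M_1 => M 0 0) h; rewrite !mxE.
move/psumr_eq0P => H.
have H0 : forall k : 'I_n, true -> 0 <= ctv y 0 k * y k 0.
  by move=> k _; rewrite !mxE mulrC mul_conjC_ge0.
have := H H0 i isT; rewrite !mxE mulrC => /eqP.
by rewrite mul_conjC_eq0 => /eqP.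
Qed.

Lemma herm_pow n (H : 'M[algC]_n.+1) k (y : 'cV_n.+1) :
  ctrmx H = H -> H ^+ k.+1 *m y = 0 -> H *m y = 0.
Proof.
move=> hH; elim: k y => [|k IH] y; first by rewrite expr1.
rewrite exprSr -mulmxE -mulmxA => /IH hy.
apply: ctv_eq0; rewrite herm_ctv // -mulmxA hy mulmx0 //.
Qed.

Lemma ctrmxD n (A B : 'M[algC]_n) : ctrmx (A + B) = ctrmx A + ctrmx B.
Proof. by rewrite /ctrmx map_mxD linearD. Qed.
Lemma ctrmxN n (A : 'M[algC]_n) : ctrmx (- A) = - ctrmx A.
Proof. by rewrite /ctrmx map_mxN linearN. Qed.
Lemma ctrmx_scalar n (c : algC) : ctrmx (c%:M : 'M_n) = (c^*)%:M.
Proof. by rewrite /ctrmx map_scalar_mx tr_scalar_mx. Qed.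

Lemma herm_shift n (H : 'M[algC]_n) c : ctrmx H = H -> c \is Num.real ->
  ctrmx (H + c%:M) = H + c%:M.
Proof. by move=> hH hc; rewrite ctrmxD hH ctrmx_scalar conj_Creal. Qed.

Section Key.
Variables (n : nat) (S : 'M[algC]_n.+1) (th : algC) (a : nat) (E : 'M[algC]_n.+1)
  (j : 'cV[algC]_n.+1).
Hypotheses (hS : ctrmx S = S) (hth : th \is Num.real).
Local Notation f := (horner_mx S).

Lemma step (R B : {poly algC}) k : ctrmx (f R) = f R ->
  f (R ^+ k.+1 * B) *m j = 0 -> f (R * B) *m j = 0.
Proof.
move=> hR; rewrite !rmorphM rmorphXn -!mulmxE -!mulmxA.
exact: herm_pow.
Qed.

Lemma key : f (('X + th%:P)^+a.+1 * 'X ^+ 2 * ('X - th%:P)^+a.+1) = 0 ->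
 ctrmx E = E -> (forall x : 'cV_n.+1, S *m x = (-th) *: x -> E *m x = x) -> E *m j = 0 ->
 S *m (S *m j) = th *: (S *m j).
Proof.
move=> hCH hE hEig hEj.
set P := 'X + th%:P; set Q := 'X - th%:P.
have fP : f P = S + th%:M by rewrite rmorphD /= horner_mx_X horner_mx_C.
have fQ : f Q = S + (- th)%:M by rewrite rmorphB /= horner_mx_X horner_mx_C raddfN.
have fX : f 'X = S by rewrite horner_mx_X.
have hP : ctrmx (f P) = f P by rewrite fP herm_shift.
have hQ : ctrmx (f Q) = f Q by rewrite fQ herm_shift // rpredN.
have hX : ctrmx (f 'X) = f 'X by rewrite fX.
have s1 : f (P * ('X ^+ 2 * Q ^+ a.+1)) *m j = 0.
  by apply: (step (k := a)) => //; rewrite mulrA hCH mul0mx.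
have s2 : f ('X * (P * Q ^+ a.+1)) *m j = 0.
  apply: (step (k := 1)) => //.
  rewrite -s1; congr (f _ *m _).
  exact: mulrCA.
have s3 : f (Q * ('X * P)) *m j = 0.
  apply: (step (k := a)) => //.
  rewrite -s2; congr (f _ *m _).
  by rewrite mulrC -mulrA.
have s4 : f P *m (S *m (f Q *m j)) = 0.
  rewrite (_ : Q * ('X * P) = P * ('X * Q)) in s3; last by ring.
  move: s3; rewrite !rmorphM /=.
 rewrite horner_mx_X -!mulmxE -!mulmxA => ->.
  done.
set u := S *m (f Q *m j).
have Su : S *m u = (- th) *: u.
  apply/eqP; rewrite -subr_eq0 scaleNr opprK.
  by move: s4; rewrite fP mulmxDl mul_scalar_mx => ->.
have Eu : E *m u = u by apply: hEig.
have uu : ctv u *m u = 0.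
  have e1 : ctv u *m S = (- th)^* *: ctv u by rewrite -herm_ctv // Su ctvZ.
  have e2 : ctv u *m f Q = (- th + - th)^* *: ctv u.
    by rewrite -herm_ctv // fQ mulmxDl Su mul_scalar_mx -scalerDl ctvZ.
  have e3 : ctv u *m j = 0 by rewrite -Eu herm_ctv // -mulmxA hEj mulmx0.
  rewrite {2}/u !mulmxA e1 -scalemxAl e2 -scalemxAl -scalemxAl e3.
  by rewrite !scaler0.
have u0 := ctv_eq0 uu.
move: u0; rewrite /u fQ mulmxDl mul_scalar_mx mulmxDr scalemxAr scaleNr.
move/eqP; rewrite addr_eq0 => /eqP ->.
by rewrite mulmxN opprK -scalemxAr.
Qed.
End Key.

Lemma seidel_herm n (T : rel 'I_n) : ctrmx (seidel T) = seidel T.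
Proof.
apply/matrixP => x y; rewrite !mxE rmorphM rmorphB /= conjCi !conjC_nat.
by rewrite mulNr -mulrN opprB.
Qed.

Lemma seidel_tr n (T : rel 'I_n) : (seidel T)^T = - seidel T.
Proof. by apply/matrixP => x y; rewrite !mxE -mulrN opprB. Qed.

Lemma tour_count n (T : rel 'I_n.+1) x : tournament T ->
  (\sum_y (T x y + T y x))%N = n.
Proof.
case=> irr tr.
rewrite (bigD1 x) //= (negbTE (irr x)) add0n.
rewrite (eq_bigr (fun _ => 1%N)); last first.
  move=> y hy; have := tr x y; rewrite eq_sym (negbTE hy) /=.
  by case: (T x y); case: (T y x).
by rewrite sum1_card cardC1 card_ord.
Qed.

Lemma no_eig n (T : rel 'I_n.+1) (th : algC) : odd n -> tournament T ->
  let S := seidel T in S *m (S *m jvec n.+1) = th *: (S *m jvec n.+1) -> False.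
Proof.
move=> hodd htour S hS.
set j := jvec n.+1; set w := S *m j.
have hs : (j^T *m w) 0 0 = 0.
  have e : (j^T *m w)^T = - (j^T *m w).
    rewrite trmx_mul /w trmx_mul seidel_tr trmxK.
    by rewrite mulmxN mulNmx mulmxA.
  have := congr1 (fun M : 'M_1 => M 0 0) e; rewrite mxE [in RHS]mxE => /eqP.
  rewrite -addr_eq0 -mulr2n mulrn_eq0 /= => /eqP; done.
have hww : (w^T *m w) 0 0 = 0.
  have e : j^T *m S *m w = - (w^T *m w).
    by rewrite /w trmx_mul seidel_tr mulmxN mulNmx opprK.
  have e2 : j^T *m S *m w = th *: (j^T *m w).
 rewrite -mulmxA.
  by rewrite [S *m w]hS -scalemxAr.
  have := congr1 (fun M : 'M_1 => M 0 0) (etrans (esym e) e2).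
  rewrite [in RHS]mxE hs mulr0 mxE => /eqP; rewrite oppr_eq0 => /eqP; done.
pose c (x : 'I_n.+1) : algC := (\sum_y T x y)%N%:R - (\sum_y T y x)%N%:R.
have wc x : w x 0 = 'i * c x.
  rewrite /w /c !natr_sum -sumrB mulr_sumr mxE; apply: eq_bigr => y _.
  by rewrite !mxE mulr1.
move: hww; rewrite mxE (eq_bigr (fun x => - (c x ^+ 2))); last first.
  by move=> x _; rewrite mxE wc -expr2 exprMn sqrCi mulN1r.
rewrite (sumrN (index_enum _) xpredT (fun i => c i ^+ 2)) => /eqP; rewrite oppr_eq0 => /eqP /psumr_eq0P H.
have cr x : c x \is Num.real by rewrite rpredB // realn.
have := H (fun x _ => ltac:(rewrite -(real_normK (cr x)); exact: exprn_ge0)) 0 isT.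
move/eqP; rewrite expf_eq0 /= subr_eq0 eqr_nat => /eqP heq.
have := tour_count 0 htour; rewrite big_split /= heq addnn => hn.
by move: hodd; rewrite -hn odd_double.
Qed.

Lemma main_n n a (th : algC) (T : rel 'I_n.+1) :
  odd n -> 0 < th -> tournament T ->
  char_poly (seidel T) =
    ('X + th%:P) ^+ a.+1 * 'X ^+ 2 * ('X - th%:P) ^+ a.+1 ->
  ~ type1 T.
Proof.
move=> hodd hth htour hchar [tau1 [[eig small] [E [[hE _ hEx hEig] hEj]]]].
have eP : 'X + th%:P = 'X - (- th)%:P by rewrite polyCN opprK.
have eX : 'X ^+ 2 = ('X - 0%:P) ^+ 1.+1 :> {poly algC} by rewrite subr0.
have roots x : root (char_poly (seidel T)) x = [|| x == - th, x == 0 | x == th].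
  rewrite hchar !rootM eP !root_exp_XsubC rootX.
  by case: (x == 0); rewrite ?orbT ?orbF.
have em : eigenvalue (seidel T) (- th) by rewrite eigenvalue_root_char roots eqxx.
have le1 := small _ em.
have htau : tau1 = - th.
  move: eig; rewrite eigenvalue_root_char roots => /or3P [/eqP //|/eqP t0|/eqP t1].
    by move: le1; rewrite t0 oppr_ge0 (lt_geF hth).
  have : - th < th by rewrite (@lt_trans _ _ 0) // oppr_lt0.
  by move/lt_geF; rewrite -{1}t1 le1.
subst tau1.
have CH := Cayley_Hamilton (seidel T); rewrite hchar in CH.
have := key (seidel_herm T) (gtr0_real hth) CH hE hEig hEj.
exact: no_eig hodd htour.
Qed.

Theorem lemma4p2 (d : nat) (theta : algC) (T : rel 'I_(2 * d)) :
  (2 <= d)%N -> 0 < theta -> tournament T ->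
  char_poly (seidel T) =
    ('X + theta%:P) ^+ (d.-1) * 'X ^+ 2 * ('X - theta%:P) ^+ (d.-1) ->
  ~ type1 T.
Proof.
case: d T => [|[|d']] T // _.
apply: (main_n (n := (2 * d'.+2).-1) (a := d')).
by rewrite mul2n !doubleS /= odd_double.
Qed.
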